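(* Let $X$ be a set of pointed Kripke models, $\Lambda$ a normal modal logic sound with respect to $X$, and $D\subseteq\boldsymbol{\mathcal{L}}_{\Lambda}$ a descriptor. If $\Lambda$ is compact and $D$ is $\Lambda$-representative, then $[\boldsymbol{\varphi}]_D$ is clopen in $\mathcal{T}_D$ for every $\boldsymbol{\varphi}\in\boldsymbol{\mathcal{L}}_{\Lambda}$. If moreover $X$ is saturated with respect to $D$, then $\mathcal{T}_D$ reflects $\Lambda$.
   Context: Signature: countable non-empty sets $\Phi$, $\mathcal{I}$; $\mathcal{L}$: $\varphi ::= \top\mid p\mid\neg\varphi\mid\varphi\wedge\varphi\mid\Box_i\varphi$ on pointed Kripke models, standard semantics. $\boldsymbol{\varphi}$: formulas $\Lambda$-provably equivalent to $\varphi$; $\boldsymbol{\mathcal{L}}_{\Lambda}=\{\boldsymbol{\varphi}\}$. $\Lambda$ is compact if a set of formulas is $\Lambda$-consistent iff all its finite subsets are. For $D\subseteq\boldsymbol{\mathcal{L}}_{\Lambda}$: $\boldsymbol{x}_D=\{y\in X:\forall\boldsymbol{\varphi}\in D,\ y\models\varphi\iff x\models\varphi\}$, $X_D=\{\boldsymbol{x}_D:x\in X\}$; $\mathcal{T}_D$ is generated by the subbasis $\{\boldsymbol{x}:x\models\varphi\}$, $\{\boldsymbol{x}:x\models\neg\varphi\}$, $\boldsymbol{\varphi}\in D$. $D$ is $\Lambda$-representative if for every $\varphi\in\mathcal{L}$ there is $\{\boldsymbol{\psi}_i\}_{i\in I}\subseteq D$ such that for every $J\subseteq I$, $\{\psi_i\}_{i\in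 J}\cup\{\neg\psi_i\}_{i\in I\setminus J}$ $\Lambda$-entails $\varphi$ or $\neg\varphi$. $X$ is saturated w.r.t. $D$ if for all $Y,Y'\subseteq D$ with $B=\{\varphi:\boldsymbol{\varphi}\in Y\}\cup\{\neg\varphi:\boldsymbol{\varphi}\in Y'\}$ $\Lambda$-consistent, some $x\in X$ satisfies all of $B$. For $\boldsymbol{\varphi}\in\boldsymbol{\mathcal{L}}_{\Lambda}$, $[\boldsymbol{\varphi}]_D=\{\boldsymbol{x}\in X_D:\forall x\in\boldsymbol{x},\ x\models\varphi\}$. $\mathcal{T}_D$ reflects $\Lambda$ if for every $Y\subseteq X_D$: $Y$ is clopen in $\mathcal{T}_D$ iff $Y=[\boldsymbol{\varphi}]_D$ for some $\boldsymbol{\varphi}\in\boldsymbol{\mathcal{L}}_{\Lambda}$. *)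

(* Defs.v *)
From Stdlib Require Import List.
Import ListNotations.
Set Implicit Arguments.

Definition countable (T : Type) : Prop :=
  exists f : T -> nat, forall a b, f a = f b -> a = b.

Section Modal.
Variables (Phi I : Type).

Inductive form : Type :=
| Top : form
| Var : Phi -> form
| Neg : form -> form
| And : form -> form -> form
| Box : I -> form -> form.

Definition Imp (a b : form) : form := Neg (And a (Neg b)).
Definition Iff (a b : form) : form := And (Imp a b) (Imp b a).

Record model : Type := Model {
  W : Type;
  Rel : I -> W -> W -> Prop;
  Val : Phi -> W -> Prop }.

Record pointed : Type := Pointed { pm : model; pw : W pm }.

Fixpoint sat (M : model) (w : W M) (f : form) : Prop :=
  match f with
  | Top => True
  | Var p => Val M p w
  | Neg g => ~ sat M w g
  | And g h => sat M w g /\ sat M w h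
  | Box i g => forall v, Rel M i w v -> sat M v g
  end.

Definition psat (x : pointed) (f : form) : Prop := sat (pm x) (pw x) f.

(* propositional tautologies: boolean valuations treating atoms and
   boxed formulas as propositional atoms *)
Fixpoint peval (v : form -> bool) (f : form) : bool :=
  match f with
  | Top => true
  | Var p => v (Var p)
  | Neg g => negb (peval v g)
  | And g h => andb (peval v g) (peval v h)
  | Box i g => v (Box i g)
  end.

Definition tautology (f : form) : Prop := forall v, peval v f = true.

Fixpoint subst (s : Phi -> form) (f : form) : form :=
  match f with
  | Top => Top
  | Var p => s p
  | Neg g => Neg (subst s g)
  | And g h => And (subst s g) (subst s h)
  | Box i g => Box i (subst s g)
  end.

Record normal_logic (L : form -> Prop) : Prop := {
  nl_taut : forall f, tautology f -> L f;
  nl_K : forall i a b, L (Imp (Box i (Imp a b)) (Imp (Box i a) (Box i b)));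
  nl_MP : forall a b, L (Imp a b) -> L a -> L b;
  nl_Nec : forall i a, L a -> L (Box i a);
  nl_US : forall s a, L a -> L (subst s a) }.

Definition sound (L : form -> Prop) (X : pointed -> Prop) : Prop :=
  forall f x, L f -> X x -> psat x f.

Definition Lequiv (L : form -> Prop) (a b : form) : Prop := L (Iff a b).

Fixpoint conj (l : list form) : form :=
  match l with
  | [] => Top
  | a :: l => And a (conj l)
  end.

Definition consistent (L : form -> Prop) (B : form -> Prop) : Prop :=
  ~ exists l : list form, (forall a, In a l -> B a) /\ L (Neg (conj l)).

Definition entails (L : form -> Prop) (B : form -> Prop) (f : form) : Prop :=
  exists l : list form, (forall a, In a l -> B a) /\ L (Imp (conj l) f).

Definition finite_set (B : form -> Prop) : Prop :=
  exists l : list form, forall a, B a <-> In a l.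

Definition compact (L : form -> Prop) : Prop :=
  forall B, consistent L B <->
    (forall B', finite_set B' -> (forall a, B' a -> B a) -> consistent L B').

(* A subset D of the Lindenbaum classes L_Lambda is represented by the set
   of all formulas whose class lies in D, i.e. a set of formulas closed
   under Lambda-provable equivalence. *)
Definition descriptor (L : form -> Prop) (D : form -> Prop) : Prop :=
  forall a b, Lequiv L a b -> D a -> D b.

Definition representative (L : form -> Prop) (D : form -> Prop) : Prop :=
  forall f, exists (J : Type) (psi : J -> form),
    (forall j, D (psi j)) /\
    forall S : J -> Prop,
      let B := fun c => exists j, (S j /\ c = psi j) \/ (~ S j /\ c = Neg (psi j)) in
      entails L B f \/ entails L B (Neg f).

Section Space.
Variables (X : pointed -> Prop) (D : form -> Prop).

Definition xD (x : pointed) : pointed -> Prop :=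
  fun y => X y /\ forall f, D f -> (psat y f <-> psat x f).

Definition XD (c : pointed -> Prop) : Prop := exists x, X x /\ c = xD x.

Definition sb (b : bool) (f : form) (c : pointed -> Prop) : Prop :=
  XD c /\ forall x, c x -> psat x (if b then f else Neg f).

(* open sets of the topology T_D on X_D generated by the subbasis
   {sb b f | f in D}: unions of finite intersections of subbasic sets *)
Definition openD (U : (pointed -> Prop) -> Prop) : Prop :=
  (forall c, U c -> XD c) /\
  forall c, U c -> exists l : list (bool * form),
    (forall p, In p l -> D (snd p)) /\
    (forall p, In p l -> sb (fst p) (snd p) c) /\
    (forall c', XD c' -> (forall p, In p l -> sb (fst p) (snd p) c') -> U c').

Definition clopenD (U : (pointed -> Prop) -> Prop) : Prop :=
  openD U /\ openD (fun c => XD c /\ ~ U c).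

Definition bracket (f : form) : (pointed -> Prop) -> Prop :=
  fun c => XD c /\ forall x, c x -> psat x f.

Definition saturated (L : form -> Prop) : Prop :=
  forall Y Y' : form -> Prop,
    (forall a, Y a -> D a) -> (forall a, Y' a -> D a) ->
    descriptor L Y -> descriptor L Y' ->
    let B := fun c => Y c \/ exists a, Y' a /\ c = Neg a in
    consistent L B -> exists x, X x /\ forall c, B c -> psat x c.

Definition reflects (L : form -> Prop) : Prop :=
  forall Y : (pointed -> Prop) -> Prop, (forall c, Y c -> XD c) ->
    (clopenD Y <-> exists f, forall c, Y c <-> bracket f c).

End Space.
End Modal.

(* Main.v *)
Require Import Defs.
From Stdlib Require Import List Classical FunctionalExtensionality PropExtensionality Cantor PeanoNat.
Import ListNotations.

Definition lit {Phi I : Type} (p : bool * form Phi I) : form Phi I :=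
  if fst p then snd p else Neg (snd p).

Lemma peval_conj {Phi I : Type} (v : form Phi I -> bool) (l : list (form Phi I)) :
  peval v (conj l) = true <-> forall a, In a l -> peval v a = true.
Proof.
  induction l as [|b l IH]; simpl.
  - split; [intros _ a []|reflexivity].
  - rewrite Bool.andb_true_iff, IH. split.
    + intros [H1 H2] a [<-|Ha]; auto.
    + intros H; split; auto.
Qed.

Lemma taut1 {Phi I : Type} {L : form Phi I -> Prop} (HL : normal_logic L) a c :
  L a -> (forall v, peval v a = true -> peval v c = true) -> L c.
Proof.
  intros Ha H. apply (nl_MP HL a c); [|exact Ha]. apply (nl_taut HL). intro v.
  specialize (H v). unfold Imp; simpl.
  destruct (peval v a); destruct (peval v c); simpl; try reflexivity.
  specialize (H eq_refl); discriminate.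
Qed.

Lemma taut2 {Phi I : Type} {L : form Phi I -> Prop} (HL : normal_logic L) a b c :
  L a -> L b -> (forall v, peval v a = true -> peval v b = true -> peval v c = true) -> L c.
Proof.
  intros Ha Hb H. apply (nl_MP HL b c); [|exact Hb].
  apply (taut1 HL a); [exact Ha|]. intros v Hv. specialize (H v Hv). unfold Imp; simpl.
  destruct (peval v b); destruct (peval v c); simpl; try reflexivity.
  specialize (H eq_refl); discriminate.
Qed.

Lemma sound_MP {Phi I : Type} {L : form Phi I -> Prop} {X} (Hs : sound L X) {x a b} :
  X x -> L (Imp a b) -> psat x a -> psat x b.
Proof.
  intros Hx Hab Ha. pose proof (Hs _ _ Hab Hx) as H. unfold psat in *; simpl in *.
  apply NNPP; tauto.
Qed.

Lemma psat_conj {Phi I : Type} (x : pointed Phi I) l :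
  psat x (conj l) <-> forall a, In a l -> psat x a.
Proof.
  induction l as [|b l IH].
  - unfold psat; simpl. split; [intros _ a []|auto].
  - change (psat x (conj (b :: l))) with (psat x b /\ psat x (conj l)).
    rewrite IH. split.
    + intros [H1 H2] a [<-|Ha]; auto.
    + intros H; split; [apply H; left; auto|intros; apply H; right; auto].
Qed.

Lemma psat_conj_neg {Phi I : Type} {x : pointed Phi I} {l} :
  ~ psat x (conj l) -> exists a, In a l /\ ~ psat x a.
Proof.
  intros H. apply NNPP; intro H'. apply H. apply psat_conj. intros a Ha.
  apply NNPP; intro. apply H'; eauto.
Qed.

Lemma lc_sat {Phi I : Type} (z : pointed Phi I) (l : list (bool * form Phi I)) :
  psat z (conj (map lit l)) <-> forall p, In p l -> psat z (lit p).
Proof.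
  rewrite psat_conj; split; intros H.
  - intros p Hp; apply H; apply in_map; auto.
  - intros a Ha; apply in_map_iff in Ha; destruct Ha as [p [<- Hp]]; auto.
Qed.

Lemma split_list {A : Type} (P Q : A -> Prop) (l : list A) :
  (forall a, In a l -> P a \/ Q a) -> exists lP lQ, (forall a, In a lP -> P a) /\
    (forall a, In a lQ -> Q a) /\ (forall a, In a l -> In a lP \/ In a lQ).
Proof.
  induction l as [|b l IH]; intros H.
  - exists [], []; simpl; tauto.
  - destruct IH as (lP & lQ & H1 & H2 & H3). { intros; apply H; right; auto. }
    destruct (H b (or_introl eq_refl)) as [Hb|Hb].
    + exists (b :: lP), lQ. split; [|split].
      * intros a [<-|Ha]; auto.
      * auto.
      * intros a [<-|Ha]; [left; left; auto|]. destruct (H3 a Ha); [left; right|right]; auto.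
    + exists lP, (b :: lQ). split; [|split].
      * auto.
      * intros a [<-|Ha]; auto.
      * intros a [<-|Ha]; [right; left; auto|]. destruct (H3 a Ha); [left|right; right]; auto.
Qed.

Lemma xD_self {Phi I : Type} {X : pointed Phi I -> Prop} {D} {x} : X x -> xD X D x x.
Proof. intros Hx; split; auto; tauto. Qed.

Lemma lit_agree {Phi I : Type} {X : pointed Phi I -> Prop} {D} {x z p} :
  xD X D x z -> D (snd p) -> (psat z (lit p) <-> psat x (lit p)).
Proof.
  intros [_ Hz] Hd. specialize (Hz _ Hd).
  destruct p as [[|] g]; unfold lit; simpl in *; auto.
  unfold psat in *; simpl; tauto.
Qed.

Lemma sb_of {Phi I : Type} {X : pointed Phi I -> Prop} {D} {x z l} :
  X x -> xD X D x z -> (forall p, In p l -> D (snd p)) ->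
  (forall p, In p l -> psat z (lit p)) ->
  forall p, In p l -> sb X D (fst p) (snd p) (xD X D x).
Proof.
  intros Hx Hz HDl Hl p Hp. split.
  - exists x; split; auto.
  - intros z' Hz'. change (psat z' (lit p)).
    apply (lit_agree Hz' (HDl p Hp)). apply (lit_agree Hz (HDl p Hp)). auto.
Qed.

Lemma key {Phi I : Type} {X : pointed Phi I -> Prop} {L D} (Hs : sound L X)
  (Hrep : representative L D) f {x} : X x ->
  exists l : list (bool * form Phi I), (forall p, In p l -> D (snd p)) /\
    (forall p, In p l -> psat x (lit p)) /\
    (forall z, X z -> (forall p, In p l -> psat z (lit p)) -> (psat z f <-> psat x f)).
Proof.
  intro Hx. destruct (Hrep f) as (J & psi & HDpsi & Hent).
  set (S := fun j => psat x (psi j)).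
  assert (conv : forall l0 : list (form Phi I),
    (forall a, In a l0 -> exists j, (S j /\ a = psi j) \/ (~ S j /\ a = Neg (psi j))) ->
    exists l : list (bool * form Phi I), (forall p, In p l -> D (snd p)) /\
      (forall p, In p l -> psat x (lit p)) /\
      (forall z, (forall p, In p l -> psat z (lit p)) -> forall a, In a l0 -> psat z a)).
  { induction l0 as [|a l0 IH]; intros Hl0.
    - exists []; simpl; repeat split; tauto.
    - destruct IH as (l & H1 & H2 & H3). { intros; apply Hl0; right; auto. }
      destruct (Hl0 a (or_introl eq_refl)) as (j & [[Sj ->]|[Sj ->]]).
      + exists ((true, psi j) :: l). split; [|split].
        * intros p [<-|Hp]; auto; apply HDpsi.
        * intros p [<-|Hp]; auto; exact Sj.
        * intros z Hz b [<-|Hb].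
          -- apply (Hz (true, psi j)); left; auto.
          -- apply H3; auto. intros p Hp; apply Hz; right; auto.
      + exists ((false, psi j) :: l). split; [|split].
        * intros p [<-|Hp]; auto; apply HDpsi.
        * intros p [<-|Hp]; auto; exact Sj.
        * intros z Hz b [<-|Hb].
          -- apply (Hz (false, psi j)); left; auto.
          -- apply H3; auto. intros p Hp; apply Hz; right; auto. }
  pose proof (Hent S) as HS; cbv zeta in HS.
  destruct HS as [[l0 [Hl0 HLl0]]|[l0 [Hl0 HLl0]]];
    destruct (conv l0 Hl0) as (l & H1 & H2 & H3); exists l; split; auto; split; auto.
  - intros z Hz Hzl.
    assert (psat x f). { apply (sound_MP Hs Hx HLl0). apply psat_conj. apply H3; auto. }
    assert (psat z f). { apply (sound_MP Hs Hz HLl0). apply psat_conj. apply H3; auto. }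
    tauto.
  - intros z Hz Hzl.
    assert (psat x (Neg f)). { apply (sound_MP Hs Hx HLl0). apply psat_conj. apply H3; auto. }
    assert (psat z (Neg f)). { apply (sound_MP Hs Hz HLl0). apply psat_conj. apply H3; auto. }
    unfold psat in *; simpl in *; tauto.
Qed.

Lemma part1 {Phi I : Type} (X : pointed Phi I -> Prop) L D (Hs : sound L X)
  (Hrep : representative L D) : forall f, clopenD X D (bracket X D f).
Proof.
  intro f. split.
  - split; [intros c [Hc _]; exact Hc|].
    intros c [[x [Hx ->]] Hb]. destruct (key Hs Hrep f Hx) as (l & H1 & H2 & H3).
    exists l. split; [auto|split].
    + apply (sb_of (z:=x)); auto. apply xD_self; auto.
    + intros c' Hc' Hsb. split; auto. intros z Hz.
      destruct Hc' as [y [Hy ->]].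
      apply (H3 z (proj1 Hz)).
      * intros p Hp. exact (proj2 (Hsb p Hp) z Hz).
      * apply Hb. apply xD_self; auto.
  - split; [intros c [Hc _]; exact Hc|].
    intros c [[x [Hx ->]] Hnb]. destruct (key Hs Hrep f Hx) as (l & H1 & H2 & H3).
    assert (Hnx : ~ psat x f).
    { intro Hxf. apply Hnb. split. { exists x; auto. }
      intros z Hz. apply (H3 z (proj1 Hz)); auto.
      intros p Hp. apply (lit_agree Hz (H1 p Hp)). auto. }
    exists l. split; [auto|split].
    + apply (sb_of (z:=x)); auto. apply xD_self; auto.
    + intros c' Hc' Hsb. split; auto. intros [_ Hb'].
      destruct Hc' as [y [Hy ->]]. apply Hnx.
      apply (H3 y Hy).
      * intros p Hp. exact (proj2 (Hsb p Hp) y (xD_self Hy)).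
      * apply Hb'. apply xD_self; auto.
Qed.
Lemma to_nat_inj p q : Cantor.to_nat p = Cantor.to_nat q -> p = q.
Proof. intro H. rewrite <- (Cantor.cancel_of_to p), <- (Cantor.cancel_of_to q), H. reflexivity. Qed.

Fixpoint code {Phi I : Type} (fP : Phi -> nat) (fI : I -> nat) (f : form Phi I) : nat :=
  match f with
  | @Top _ _ => 0
  | @Var _ _ p => S (Cantor.to_nat (0, fP p))
  | Neg g => S (Cantor.to_nat (1, code fP fI g))
  | And g h => S (Cantor.to_nat (2, Cantor.to_nat (code fP fI g, code fP fI h)))
  | Box i g => S (Cantor.to_nat (3, Cantor.to_nat (fI i, code fP fI g)))
  end.

Lemma code_inj {Phi I : Type} (fP : Phi -> nat) (fI : I -> nat)
  (HP : forall a b, fP a = fP b -> a = b) (HI : forall a b, fI a = fI b -> a = b) :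
  forall f g : form Phi I, code fP fI f = code fP fI g -> f = g.
Proof.
  induction f as [| p | f IH | f1 IH1 f2 IH2 | i f IH]; destruct g as [| q | g | g1 g2 | j g];
    cbn [code]; intro H; try discriminate; try reflexivity;
    apply eq_add_S in H; apply to_nat_inj in H;
    pose proof (f_equal fst H) as H0; pose proof (f_equal snd H) as H1; cbn [fst snd] in H0, H1;
    try discriminate H0; clear H H0.
  - f_equal; auto.
  - f_equal; auto.
  - apply to_nat_inj in H1;
    pose proof (f_equal fst H1) as H2; pose proof (f_equal snd H1) as H3; cbn [fst snd] in H2, H3.
    f_equal; auto.
  - apply to_nat_inj in H1;
    pose proof (f_equal fst H1) as H2; pose proof (f_equal snd H1) as H3; cbn [fst snd] in H2, H3.
    f_equal; auto.
Qed.

Lemma cons_sub {Phi I : Type} {L : form Phi I -> Prop} {B B' : form Phi I -> Prop} :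
  consistent L B -> (forall a, B' a -> B a) -> consistent L B'.
Proof. intros H Hs [l [Hl HL]]. apply H. exists l; split; auto. Qed.

Fixpoint G {Phi I : Type} (L D Sg : form Phi I -> Prop) (cd : form Phi I -> nat) (n : nat)
  : form Phi I -> Prop :=
  match n with
  | 0 => fun _ => False
  | S n => fun a => G L D Sg cd n a \/ exists g, cd g = n /\ D g /\
      ((a = g /\ consistent L (fun b => Sg b \/ G L D Sg cd n b \/ b = g)) \/
       (a = Neg g /\ ~ consistent L (fun b => Sg b \/ G L D Sg cd n b \/ b = g)))
  end.

Lemma cut {Phi I : Type} {L : form Phi I -> Prop} (HL : normal_logic L) l1 l2 l' g :
  L (Neg (conj l1)) -> L (Neg (conj l2)) ->
  (forall a, In a l1 -> In a l' \/ a = g) -> (forall a, In a l2 -> In a l' \/ a = Neg g) ->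
  L (Neg (conj l')).
Proof.
  intros H1 H2 Hl1 Hl2. apply (taut2 HL _ _ _ H1 H2). intros v Hv1 Hv2. simpl in *.
  destruct (peval v (conj l')) eqn:E; [|reflexivity]. exfalso.
  rewrite peval_conj in E. destruct (peval v g) eqn:Eg.
  - assert (peval v (conj l1) = true) as R.
    { apply peval_conj. intros a Ha. destruct (Hl1 a Ha) as [?| ->]; auto. }
    rewrite R in Hv1; discriminate.
  - assert (peval v (conj l2) = true) as R.
    { apply peval_conj. intros a Ha. destruct (Hl2 a Ha) as [?| ->]; auto. simpl; rewrite Eg; reflexivity. }
    rewrite R in Hv2; discriminate.
Qed.

Lemma G_cons {Phi I : Type} {L : form Phi I -> Prop} (HL : normal_logic L) D Sg cd
  (Hinj : forall f g, cd f = cd g -> f = g) :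
  consistent L Sg -> forall n, consistent L (fun b => Sg b \/ G L D Sg cd n b).
Proof.
  intros HC n. induction n as [|n IHn].
  - apply (cons_sub HC). simpl; tauto.
  - intros [l [Hl HLl]]. simpl in Hl.
    destruct (classic (exists g, cd g = n /\ D g)) as [[g [Hc Hdg]] | Hno].
    2: { apply IHn; exists l; split; auto. intros a Ha.
         destruct (Hl a Ha) as [?|[?|(g & Hc & Hdg & _)]]; auto. exfalso; apply Hno; eauto. }
    destruct (classic (consistent L (fun b => Sg b \/ G L D Sg cd n b \/ b = g))) as [Hcg | Hncg].
    + apply Hcg. exists l. split; auto. intros a Ha.
      destruct (Hl a Ha) as [?|[?|(g' & Hc' & Hdg' & [[-> _]|[-> Hn']])]]; auto.
      * assert (g' = g) as -> by (apply Hinj; congruence). auto.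
      * assert (g' = g) as -> by (apply Hinj; congruence). contradiction.
    + apply NNPP in Hncg. destruct Hncg as [l1 [Hl1 HL1]].
      destruct (split_list (fun b => Sg b \/ G L D Sg cd n b) (fun b => b = g) l1)
        as (lP1 & lQ1 & HP1 & HQ1 & Hc1).
      { intros a Ha. destruct (Hl1 a Ha) as [?|[?|?]]; auto. }
      destruct (split_list (fun b => Sg b \/ G L D Sg cd n b) (fun b => b = Neg g) l)
        as (lP2 & lQ2 & HP2 & HQ2 & Hc2).
      { intros a Ha. destruct (Hl a Ha) as [?|[?|(g' & Hc' & Hdg' & [[-> Hcc]|[-> Hn']])]]; auto.
        - assert (g' = g) as -> by (apply Hinj; congruence). exfalso; apply Hcc; exists l1; auto.
        - assert (g' = g) as -> by (apply Hinj; congruence). auto. }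
      apply IHn. exists (lP1 ++ lP2). split.
      * intros a Ha. apply in_app_or in Ha. destruct Ha; auto.
      * apply (cut HL l1 l (lP1 ++ lP2) g HL1 HLl).
        -- intros a Ha. destruct (Hc1 a Ha); [left; apply in_or_app; auto|right; auto].
        -- intros a Ha. destruct (Hc2 a Ha); [left; apply in_or_app; auto|right; auto].
Qed.

Lemma G_mono {Phi I : Type} (L D Sg : form Phi I -> Prop) cd a :
  forall k n, G L D Sg cd n a -> G L D Sg cd (k + n) a.
Proof. induction k; intros n H; simpl; auto. Qed.

Lemma G_lit {Phi I : Type} (L D Sg : form Phi I -> Prop) cd :
  forall n a, G L D Sg cd n a -> exists g, D g /\ (a = g \/ a = Neg g).
Proof.
  induction n as [|n IH]; simpl; intros a H; [contradiction|].
  destruct H as [H|(g & _ & Hg & [[-> _]|[-> _]])]; eauto.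
Qed.
Lemma part2 {Phi I : Type} (cPhi : countable Phi) (cI : countable I)
  (X : pointed Phi I -> Prop) (L : form Phi I -> Prop)
  (HL : normal_logic L) (Hs : sound L X)
  (D : form Phi I -> Prop) (HD : descriptor L D) (Hrep : representative L D) :
  saturated X D L -> reflects X D L.
Proof.
  intros Hsat Y HY. split.
  2: { intros [f Hf]. assert (Y = bracket X D f) as ->.
       { apply functional_extensionality; intro c; apply propositional_extensionality; apply Hf. }
       apply (part1 X L D Hs Hrep). }
  intros [HYo HNo]. destruct HYo as [_ HYo]. destruct HNo as [_ HNo].
  set (goodY := fun l : list (bool * form Phi I) => (forall p, In p l -> D (snd p)) /\
         forall c', XD X D c' -> (forall p, In p l -> sb X D (fst p) (snd p) c') -> Y c').
  set (goodN := fun l : list (bool * form Phi I) => (forall p, In p l -> D (snd p)) /\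
         forall c', XD X D c' -> (forall p, In p l -> sb X D (fst p) (snd p) c') -> ~ Y c').
  set (SY := fun s => exists l, goodY l /\ s = Neg (conj (map lit l))).
  set (SN := fun s => exists l, goodN l /\ s = Neg (conj (map lit l))).
  set (Sg := fun s => SY s \/ SN s).
  destruct (classic (consistent L Sg)) as [HC | HNC].
  - exfalso.
    destruct cPhi as [fP HfP]; destruct cI as [fI HfI].
    set (cd := code fP fI).
    assert (Hinj : forall f g, cd f = cd g -> f = g) by (apply code_inj; auto).
    set (Gw := fun a => exists n, G L D Sg cd n a).
    assert (HCw : consistent L (fun b => Sg b \/ Gw b)).
    { intros [l [Hl HLl]].
      assert (exists N, forall a, In a l -> Sg a \/ G L D Sg cd N a) as [N HN].
      { clear HLl. induction l as [|b l IH].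
        - exists 0; simpl; tauto.
        - destruct IH as [N HN]. { intros; apply Hl; right; auto. }
          destruct (Hl b (or_introl eq_refl)) as [Hb|[n Hb]].
          + exists N. intros a [<-|Ha]; auto.
          + exists (N + n). intros a [<-|Ha].
            * right; apply G_mono; auto.
            * destruct (HN a Ha); auto. right. rewrite Nat.add_comm. apply G_mono; auto. }
      apply (G_cons HL D Sg cd Hinj HC N). exists l; auto. }
    assert (Hmax : forall g, D g -> Gw g \/ Gw (Neg g)).
    { intros g Hg.
      destruct (classic (consistent L (fun b => Sg b \/ G L D Sg cd (cd g) b \/ b = g))) as [H|H];
        [left|right]; exists (S (cd g)); simpl; right; exists g; auto. }
    assert (Hlit : forall a, Gw a -> exists g, D g /\ (a = g \/ a = Neg g)).
    { intros a [n Hn]. apply (G_lit L D Sg cd n a Hn). }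
    assert (HdY : descriptor L (fun a => D a /\ Gw a)).
    { intros a b Hab [Ha Hga]. split; [apply (HD a b); auto|].
      destruct (Hmax b (HD a b Hab Ha)) as [?|Hnb]; auto. exfalso.
      apply HCw. exists [a; Neg b]. split.
      - intros c [<-|[<-|[]]]; auto.
      - apply (taut1 HL _ _ Hab). intros v Hv. simpl in *.
        destruct (peval v a); destruct (peval v b); simpl in *; auto. }
    assert (HdY' : descriptor L (fun a => D a /\ Gw (Neg a))).
    { intros a b Hab [Ha Hga]. split; [apply (HD a b); auto|].
      destruct (Hmax b (HD a b Hab Ha)) as [Hnb|?]; auto. exfalso.
      apply HCw. exists [Neg a; b]. split.
      - intros c [<-|[<-|[]]]; auto.
      - apply (taut1 HL _ _ Hab). intros v Hv. simpl in *.
        destruct (peval v a); destruct (peval v b); simpl in *; auto. }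
    pose proof (Hsat (fun a => D a /\ Gw a) (fun a => D a /\ Gw (Neg a))
      (fun a H => proj1 H) (fun a H => proj1 H) HdY HdY') as Hx. cbv zeta in Hx.
    destruct Hx as (x & Hx & HxB).
    { apply (cons_sub HCw). intros c [[_ Hc]|(a & [_ Ha] & ->)]; auto. }
    assert (Hlitp : forall p, D (snd p) -> psat x (lit p) -> Gw (lit p)).
    { intros [[|] g] Hg Hp; unfold lit in *; simpl in *.
      - destruct (Hmax g Hg) as [?|Hn]; auto. exfalso.
        exact (HxB (Neg g) (or_intror (ex_intro _ g (Logic.conj (Logic.conj Hg Hn) eq_refl))) Hp).
      - destruct (Hmax g Hg) as [Hn|?]; auto. exfalso.
        exact (Hp (HxB g (or_introl (Logic.conj Hg Hn)))). }
    assert (contra : forall l, (goodY l \/ goodN l) -> (forall p, In p l -> psat x (lit p)) -> False).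
    { intros l Hg Hl. apply HCw. exists (Neg (conj (map lit l)) :: map lit l). split.
      - intros a [<-|Ha].
        + left. destruct Hg; [left|right]; exists l; auto.
        + right. apply in_map_iff in Ha as [p [<- Hp]]. apply Hlitp; auto.
          destruct Hg as [[HDl _]|[HDl _]]; auto.
      - apply (nl_taut HL). intro v. simpl.
        destruct (peval v (conj (map lit l))); reflexivity. }
    destruct (classic (Y (xD X D x))) as [Hy | Hny].
    + destruct (HYo _ Hy) as (l & H1 & H2 & H3). apply (contra l).
      * left; split; auto.
      * intros p Hp. exact (proj2 (H2 p Hp) x (xD_self Hx)).
    + destruct (HNo (xD X D x)) as (l & H1 & H2 & H3).
      { split; [exists x; auto | auto]. }
      apply (contra l).
      * right; split; auto. intros c' Hc' Hsb. exact (proj2 (H3 c' Hc' Hsb)).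
      * intros p Hp. exact (proj2 (H2 p Hp) x (xD_self Hx)).
  - apply NNPP in HNC. destruct HNC as (ls & Hls & HLls).
    destruct (split_list SY SN ls Hls) as (lP & lQ & HP & HQ & Hcov).
    assert (HL' : L (Neg (conj (lP ++ lQ)))).
    { apply (taut1 HL _ _ HLls). intros v Hv. simpl in *.
      destruct (peval v (conj (lP ++ lQ))) eqn:E; [|reflexivity]. exfalso.
      rewrite peval_conj in E. assert (peval v (conj ls) = true) as R.
      { apply peval_conj. intros a Ha. apply E. apply in_or_app. apply Hcov; auto. }
      rewrite R in Hv. discriminate. }
    exists (Neg (conj lP)).
    assert (H0 : forall x z, X x -> xD X D x z -> exists l,
      ((In (Neg (conj (map lit l))) lP /\ goodY l) \/ (In (Neg (conj (map lit l))) lQ /\ goodN l)) /\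
      (forall p, In p l -> D (snd p)) /\ (forall p, In p l -> sb X D (fst p) (snd p) (xD X D x))).
    { intros x z Hx Hz. pose proof (Hs _ z HL' (proj1 Hz)) as Hzs.
      destruct (psat_conj_neg Hzs) as (a & Ha & Hna). apply in_app_or in Ha.
      destruct Ha as [Ha|Ha].
      - destruct (HP a Ha) as (l & Hg & ->). exists l.
        assert (psat z (conj (map lit l))) as Hzl by (apply NNPP; exact Hna).
        split; [left; auto|split; [apply Hg|]].
        apply (sb_of Hx Hz); [apply Hg | apply lc_sat; auto].
      - destruct (HQ a Ha) as (l & Hg & ->). exists l.
        assert (psat z (conj (map lit l))) as Hzl by (apply NNPP; exact Hna).
        split; [right; auto|split; [apply Hg|]].
        apply (sb_of Hx Hz); [apply Hg | apply lc_sat; auto]. }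
    intro c. split.
    + intro Hc. pose proof (HY c Hc) as [x [Hx ->]]. split; [exists x; auto|].
      intros z Hz. change (~ psat z (conj lP)). intro Hzc.
      destruct (H0 x z Hx Hz) as (l & [[Hin Hg]|[Hin Hg]] & HDl & Hsb).
      * apply (proj1 (psat_conj z lP) Hzc _ Hin). apply lc_sat. intros p Hp.
        exact (proj2 (Hsb p Hp) z Hz).
      * apply ((proj2 Hg) (xD X D x) (ex_intro _ x (Logic.conj Hx eq_refl)) Hsb Hc).
    + intros [[x [Hx ->]] Hb]. specialize (Hb x (xD_self Hx)).
      destruct (psat_conj_neg Hb) as (a & Ha & Hna).
      destruct (HP a Ha) as (l & Hg & ->). apply (proj2 Hg).
      * exists x; auto.
      * apply (sb_of Hx (xD_self Hx)); [apply Hg|]. apply lc_sat. apply NNPP; exact Hna.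
Qed.

Theorem proposition25 (Phi I : Type)
  (cPhi : countable Phi) (cI : countable I) (nPhi : inhabited Phi) (nI : inhabited I)
  (X : pointed Phi I -> Prop) (L : form Phi I -> Prop)
  (HL : normal_logic L) (Hsound : sound L X)
  (D : form Phi I -> Prop) (HD : descriptor L D) :
  compact L -> representative L D ->
  (forall f : form Phi I, clopenD X D (bracket X D f)) /\
  (saturated X D L -> reflects X D L).
Proof.
  intros _ Hrep. split.
  - apply (part1 X L D Hsound Hrep).
  - apply (part2 cPhi cI X L HL Hsound D HD Hrep).
Qed.
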